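(* Let $\Lambda\subset\mathbb{R}^d$ be a full-rank lattice and $P=\Lambda\cap[0,1)^d$, and assume $|P|\ge 2$. Then $q(P)\ge q(\Lambda)$ and \[ h(P)\le \begin{cases} 2\sqrt{d}\, h(\Lambda) & \text{if } h(\Lambda)\ge 1/2,\\ (1+\sqrt{d})\,h(\Lambda) & \text{otherwise.}\end{cases} \] Consequently, \[ \rho(P)\le \begin{cases} 2\sqrt{d}\, \rho(\Lambda) & \text{if } h(\Lambda)\ge 1/2,\\ (1+\sqrt{d})\,\rho(\Lambda) & \text{otherwise.}\end{cases} \]
   Context: For a finite point set $P\subset[0,1]^d$ with at least two points: covering radius $h(P)=\sup_{x\in[0,1]^d}\min_{y\in P}\|x-y\|_2$, separation radius $q(P)=\frac12\min_{x,y\in P,\,x\ne y}\|x-y\|_2$, mesh ratio $\rho(P)=h(P)/q(P)$. For a full-rank lattice $\Lambda\subset\mathbb{R}^d$: $h(\Lambda)=\sup_{x\in\mathbb{R}^d}\min_{y\in\Lambda}\|x-y\|_2$, $q(\Lambda)=\frac12\min_{x\in\Lambda\setminus\{0\}}\|x\|_2$, $\rho(\Lambda)=h(\Lambda)/q(\Lambda)$. *)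

(* Defs.v *)
From HB Require Import structures.
From mathcomp Require Import all_boot all_order all_algebra.
From mathcomp Require Import all_classical all_reals.
Set Implicit Arguments. Unset Strict Implicit. Unset Printing Implicit Defensive.
Import Order.TTheory GRing.Theory Num.Theory.
Local Open Scope ring_scope.
Local Open Scope classical_set_scope.

Section Defs.
Variables (R : realType) (d : nat).
Notation V := 'rV[R]_d.

Definition enorm (x : V) : R := Num.sqrt (\sum_(i < d) x ord0 i ^+ 2).

Definition lattice (B : 'M[R]_d) : set V :=
  [set x | exists z : 'rV[int]_d, x = map_mx (fun k : int => k%:~R) z *m B].

Definition full_rank (B : 'M[R]_d) : Prop := B \in unitmx.

Definition cube_co : set V := [set x | forall i, 0 <= x ord0 i /\ x ord0 i < 1].
Definition cube_cc : set V := [set x | forall i, 0 <= x ord0 i /\ x ord0 i <= 1].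

Definition dist_to (S : set V) (x : V) : R := inf [set enorm (x - y) | y in S].

Definition cov_radius (Om S : set V) : R := sup [set dist_to S x | x in Om].

Definition hP (P : set V) : R := cov_radius cube_cc P.
Definition qP (P : set V) : R :=
  inf [set r | exists x y, P x /\ P y /\ x != y /\ r = enorm (x - y)] / 2.
Definition rhoP (P : set V) : R := hP P / qP P.

Definition hL (B : 'M[R]_d) : R := cov_radius setT (lattice B).
Definition qL (B : 'M[R]_d) : R :=
  inf [set enorm x | x in lattice B `&` [set x | x != 0]] / 2.
Definition rhoL (B : 'M[R]_d) : R := hL B / qL B.

End Defs.
Arguments cube_co {R d}.
Arguments cube_cc {R d}.

(* Main.v *)
Require Import Defs.
From HB Require Import structures.
From mathcomp Require Import all_boot all_order all_algebra.
From mathcomp Require Import all_classical all_reals.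
From mathcomp Require Import ring lra.
Import Order.TTheory GRing.Theory Num.Theory.
Local Open Scope ring_scope.
Local Open Scope classical_set_scope.

Section Aux.
Variables (R : realType) (d : nat).
Implicit Types (f g : 'I_d -> R) (u v : 'rV[R]_d).

Lemma CS f g : (\sum_i f i * g i) ^+ 2 <= (\sum_i f i ^+ 2) * (\sum_i g i ^+ 2).
Proof.
set A := \sum_i f i ^+ 2; set C := \sum_i f i * g i; set D := \sum_i g i ^+ 2.
have A0 : 0 <= A by apply: sumr_ge0 => i _; exact: sqr_ge0.
have D0 : 0 <= D by apply: sumr_ge0 => i _; exact: sqr_ge0.
have key t : 0 <= t ^+ 2 * A + 2 * t * C + D.
  have -> : t ^+ 2 * A + 2 * t * C + D = \sum_i (t * f i + g i) ^+ 2.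
    rewrite /A /C /D mulr_sumr mulr_sumr -!big_split /=.
    by apply: eq_bigr => i _; ring.
  by apply: sumr_ge0 => i _; exact: sqr_ge0.
have [Az|Ap] := eqVneq A 0.
  have f0 i : f i = 0.
    move/eqP: Az; rewrite psumr_eq0; last by move=> j _; exact: sqr_ge0.
    by move/allP/(_ i (mem_index_enum i)) => /= /eqP/eqP; rewrite sqrf_eq0 => /eqP.
  have -> : C = 0 by rewrite /C big1 // => i _; rewrite f0 mul0r.
  by rewrite expr2 mul0r Az mul0r.
have Agt : 0 < A by rewrite lt_def Ap A0.
have := key (- C / A).
have -> : (- C / A) ^+ 2 * A + 2 * (- C / A) * C + D = D - C ^+ 2 / A.
  by field.
rewrite subr_ge0 ler_pdivrMr // => h; by rewrite mulrC.
Qed.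

Lemma enorm_ge0 u : 0 <= enorm u.
Proof. exact: sqrtr_ge0. Qed.

Lemma sum_sq_ge0 f : 0 <= \sum_i f i ^+ 2.
Proof. by apply: sumr_ge0 => i _; exact: sqr_ge0. Qed.

Lemma enormD u v : enorm (u + v) <= enorm u + enorm v.
Proof.
rewrite /enorm.
set A := \sum_i u ord0 i ^+ 2; set D := \sum_i v ord0 i ^+ 2.
set C := \sum_i u ord0 i * v ord0 i.
have A0 : 0 <= A by apply: sum_sq_ge0.
have D0 : 0 <= D by apply: sum_sq_ge0.
have hC : C <= Num.sqrt A * Num.sqrt D.
  rewrite -sqrtrM //; apply: (le_trans (ler_norm C)).
  rewrite -sqrtr_sqr ler_sqrt; last by apply: mulr_ge0.
  exact: CS.
have -> : \sum_i (u + v) ord0 i ^+ 2 = A + 2 * C + D.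
  rewrite /A /C /D mulr_sumr -!big_split /=.
  by apply: eq_bigr => i _; rewrite mxE; ring.
have S0 : 0 <= Num.sqrt A + Num.sqrt D by rewrite addr_ge0 // sqrtr_ge0.
rewrite -(ger0_norm S0) -sqrtr_sqr ler_sqrt ?sqr_ge0 //.
rewrite sqrrD !sqr_sqrtr //.
have : 2 * C <= 2 * (Num.sqrt A * Num.sqrt D) by rewrite ler_pM2l.
lra.
Qed.

Lemma enorm_coord u i : `|u ord0 i| <= enorm u.
Proof.
rewrite /enorm -sqrtr_sqr ler_sqrt; last exact: sum_sq_ge0.
rewrite (bigD1 i) //= lerDl; apply: sumr_ge0 => j _; exact: sqr_ge0.
Qed.

Lemma enorm_le_coords u k : 0 <= k -> (forall i, `|u ord0 i| <= k) ->
  enorm u <= Num.sqrt d%:R * k.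
Proof.
move=> k0 hk; rewrite /enorm -(ger0_norm k0) -sqrtr_sqr -sqrtrM ?ler0n //.
rewrite ler_sqrt; last by rewrite mulr_ge0 ?ler0n ?sqr_ge0.
have -> : d%:R * k ^+ 2 = \sum_(i < d) k ^+ 2 :> R.
  by rewrite sumr_const card_ord mulr_natl.
apply: ler_sum => i _; rewrite -real_normK ?num_real //.
by rewrite lerXn2r ?nnegrE ?normr_ge0.
Qed.

Lemma enorm_le_sum u : enorm u <= \sum_i `|u ord0 i|.
Proof.
have S0 : 0 <= \sum_i `|u ord0 i| by apply: sumr_ge0.
rewrite /enorm -(ger0_norm S0) -sqrtr_sqr ler_sqrt ?sqr_ge0 //.
suff [] : \sum_i u ord0 i ^+ 2 <= (\sum_i `|u ord0 i|) ^+ 2 /\ 0 <= \sum_i `|u ord0 i| by [].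
elim/big_rec2: _ => [|i a b _ [hab b0]]; first by rewrite expr0n lexx.
split; last by rewrite addr_ge0.
rewrite sqrrD -real_normK ?num_real //.
have : 0 <= `|u ord0 i| * a by rewrite mulr_ge0 ?normr_ge0.
lra.
Qed.


Local Notation intv z := (map_mx (fun k : int => (k%:~R : R)) (z : 'rV[int]_d)).

Lemma intvB z1 z2 : intv (z1 - z2) = intv z1 - intv z2.
Proof. by apply/matrixP => i j; rewrite !mxE intrB. Qed.

Lemma intv0 : intv 0 = 0.
Proof. by apply/matrixP => i j; rewrite !mxE. Qed.

Lemma lattice0 (B : 'M[R]_d) : lattice B 0.
Proof. by exists 0; rewrite intv0 mul0mx. Qed.

Lemma latticeB (B : 'M[R]_d) x y : lattice B x -> lattice B y -> lattice B (x - y).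
Proof. by move=> [z1 ->] [z2 ->]; exists (z1 - z2); rewrite -mulmxBl -intvB. Qed.

Lemma inf_ge0 (E : set R) : (forall x, E x -> 0 <= x) -> 0 <= inf E.
Proof.
move=> h; case: (pselect (exists x, E x)) => [[x Ex]|nE].
  by apply: lb_le_inf; [exists x | move=> y /h].
have -> : E = set0 by apply/seteqP; split => x // Ex; exfalso; apply: nE; exists x.
by rewrite inf0.
Qed.

Lemma dist_ge0 (S : set 'rV[R]_d) x : 0 <= dist_to S x.
Proof. by apply: inf_ge0 => _ [y _ <-]; exact: enorm_ge0. Qed.

Lemma dist_le (S : set 'rV[R]_d) x y : S y -> dist_to S x <= enorm (x - y).
Proof.
move=> Sy; apply: ge_inf; last by exists y.
by exists 0 => _ [z _ <-]; exact: enorm_ge0.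
Qed.

Lemma dist_adh (S : set 'rV[R]_d) x e : S !=set0 -> 0 < e ->
  exists2 y, S y & enorm (x - y) < dist_to S x + e.
Proof.
move=> [y0 Sy0] e0.
have hi : has_inf [set enorm (x - y) | y in S].
  split; first by exists (enorm (x - y0)), y0.
  by exists 0 => _ [z _ <-]; exact: enorm_ge0.
have [_ [y Sy <-] h] := inf_adherent e0 hi.
by exists y.
Qed.


Lemma cover_bound (B : 'M[R]_d) y : B \in unitmx ->
  dist_to (lattice B) y <= \sum_j \sum_i `|B i j|.
Proof.
move=> uB; set w := y *m invmx B.
set z : 'rV[int]_d := \row_i Num.floor (w ord0 i).
have Lp : lattice B (intv z *m B) by exists z.
apply: (le_trans (dist_le _ y _ Lp)).
have -> : y - intv z *m B = (w - intv z) *m B by rewrite mulmxBl /w mulmxKV.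
apply: (le_trans (enorm_le_sum _)); apply: ler_sum => j _.
rewrite mxE; apply: (le_trans (ler_norm_sum _ _ _)); apply: ler_sum => i _.
rewrite normrM ler_piMl ?normr_ge0 //.
have -> : (w - intv z) ord0 i = w ord0 i - (Num.floor (w ord0 i))%:~R by rewrite !mxE.
have h1 := floor_le_tmp (w ord0 i); have h2 := lt_succ_floor (w ord0 i).
rewrite intrD in h2; have e1 : (1%:~R : R) = 1 by [].
rewrite e1 in h2.
rewrite ger0_norm; lra.
Qed.

Lemma qL_elem_bound (B : 'M[R]_d) v : B \in unitmx -> lattice B v -> v != 0 ->
  1 <= enorm v * (\sum_i \sum_j `|invmx B j i| + 1).
Proof.
move=> uB [z vE] v0.
have zE : intv z = v *m invmx B by rewrite vE mulmxK.
have [i zi] : exists i, z ord0 i != 0.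
  apply/existsP; apply: contraR v0; rewrite negb_exists => /forallP hz.
  rewrite vE; have -> : z = 0 by apply/matrixP => a b; rewrite (ord1 a) mxE; apply/eqP/negPn/hz.
  by rewrite intv0 mul0mx.
have h1 : 1 <= `|(z ord0 i)%:~R : R|.
  by rewrite -intr_norm (ler_int _ 1) -gtz0_ge1 normr_gt0.
have : (z ord0 i)%:~R = (v *m invmx B) ord0 i by rewrite -zE mxE.
rewrite mxE => ez; rewrite ez in h1.
apply: (le_trans h1); apply: (le_trans (ler_norm_sum _ _ _)).
apply: (@le_trans _ _ (enorm v * \sum_j `|invmx B j i|)).
  rewrite mulr_sumr; apply: ler_sum => j _; rewrite normrM.
  by apply: ler_wpM2r; [exact: normr_ge0 | exact: enorm_coord].
apply: ler_wpM2l; first exact: enorm_ge0.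
rewrite [X in _ <= X + 1](bigD1 i) //= -addrA lerDl addr_ge0 //.
by apply: sumr_ge0 => k _; apply: sumr_ge0.
Qed.


End Aux.

Theorem mainTheorem3 (R : realType) (d : nat) (B : 'M[R]_d) :
  full_rank B ->
  (exists x y : 'rV[R]_d,
      (lattice B `&` cube_co) x /\ (lattice B `&` cube_co) y /\ x != y) ->
  let P := lattice B `&` cube_co in
  let c := if 1 / 2 <= hL B then 2 * Num.sqrt (d%:R) else 1 + Num.sqrt (d%:R) in
  qL B <= qP P /\ hP P <= c * hL B /\ rhoP P <= c * rhoL B.
Proof.
move=> uB [x0 [y0 [Px0 [Py0 nxy]]]] P c.
rewrite /full_rank in uB.
set L := lattice B.
have HS : has_sup [set dist_to L y | y in setT].
  split; first by exists (dist_to L 0), 0.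
  by exists (\sum_j \sum_i `|B i j|) => _ [y _ <-]; exact: cover_bound.
have hLd y : dist_to L y <= hL B by apply: sup_upper_bound => //; exists y.
have hL0 : 0 <= hL B by apply: le_trans (hLd 0); exact: dist_ge0.
have sd0 : 0 <= Num.sqrt (d%:R : R) by exact: sqrtr_ge0.
set SL := [set enorm v | v in L `&` [set v | v != 0]].
set SP := [set r | exists x y, P x /\ P y /\ x != y /\ r = enorm (x - y)].
have SPne : SP !=set0 by exists (enorm (x0 - y0)), x0, y0.
have SLlb : has_lbound SL by exists 0 => _ [v _ <-]; exact: enorm_ge0.
have qLP : qL B <= qP P.
  rewrite /qL /qP -/L -/SL -/SP.
  suff : inf SL <= inf SP by lra.
  apply: lb_le_inf => // r [x [y [Px [Py [nxy' ->]]]]].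
  apply: ge_inf => //; exists (x - y) => //; split.
    by apply: latticeB; [case: Px | case: Py].
  by rewrite /= subr_eq0.
have qL0 : 0 < qL B.
  rewrite /qL -/L -/SL.
  set K := \sum_i \sum_j `|invmx B j i| + 1.
  have K0 : 0 < K by rewrite /K ltr_pwDr // sumr_ge0 // => i _; apply: sumr_ge0.
  suff hK : 1 / K <= inf SL.
    have : 0 < 1 / K by rewrite divr_gt0 ?ltr01.
    lra.
  apply: lb_le_inf.
    exists (enorm (x0 - y0)), (x0 - y0) => //; split.
      by apply: latticeB; [case: Px0 | case: Py0].
    by rewrite /= subr_eq0.
  move=> _ [v [Lv nv] <-]; rewrite ler_pdivrMr //.
  exact: qL_elem_bound.
have c0 : 0 <= c by rewrite /c; case: ifP => _; [rewrite mulr_ge0 | rewrite addr_ge0].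
have hPb : hP P <= c * hL B.
  apply: ge_sup.
    exists (dist_to P 0), 0 => // i; rewrite mxE; lra.
  move=> _ [x Cx <-].
  rewrite /c; case: ifP => hh.
    apply: le_trans (@dist_le _ _ _ x _ Px0) _.
    apply: le_trans (@enorm_le_coords _ _ _ 1 _ _) _ => //.
      move=> i; rewrite !mxE; have := Cx i; case: Px0 => _ /(_ i).
      move=> [h1 h2] [h3 h4]; rewrite ler_norml; apply/andP; split; lra.
    nra.
  have hlt : hL B < 1 / 2 by rewrite ltNge hh.
  set s := 1 + Num.sqrt (d%:R : R).
  have s0 : 0 < s by rewrite /s ltr_pwDl.
  apply/ler_addgt0Pr => e e0.
  set dl := (1 / 2 - hL B) / 2.
  have dl0 : 0 < dl by rewrite /dl; lra.
  set eps := if e / s < dl then e / s else dl.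
  have es0 : 0 < e / s by rewrite divr_gt0.
  have [ep0 [ep1 ep2]] : 0 < eps /\ eps <= e / s /\ eps <= dl.
    by rewrite /eps; case: ifP => h; split => //; split => //; lra.
  set lo := hL B + eps.
  set hi := 1 - lo.
  have lohi : lo <= hi by rewrite /hi /lo; move: ep2; rewrite /dl; lra.
  have lo0 : 0 <= lo by rewrite /lo; lra.
  have hiE : hi = 1 - lo by [].
  set y : 'rV[R]_d := \row_i (if x ord0 i < lo then lo else if hi < x ord0 i then hi else x ord0 i).
  have yc i : lo <= y ord0 i <= hi.
    rewrite /y mxE; case: (ltP (x ord0 i) lo) => h1; case: (ltP hi (x ord0 i)) => h2;
      apply/andP; split; lra.
  have xy i : `|(x - y) ord0 i| <= lo.
    have := Cx i; rewrite /y !mxE => -[h3 h4]; move: hiE => hiE.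
    case: (ltP (x ord0 i) lo) => h1; case: (ltP hi (x ord0 i)) => h2;
      rewrite ler_norml; apply/andP; split; lra.
  have Lne : L !=set0 by exists 0; exact: lattice0.
  have [p Lp hp] := @dist_adh _ _ L y eps Lne ep0.
  have hp' : enorm (y - p) < lo by have := hLd y; rewrite /lo; lra.
  have Pp : P p.
    split => // i.
    have e1 : (y - p) ord0 i = y ord0 i - p ord0 i by rewrite !mxE.
    have := enorm_coord _ _ (y - p) i; rewrite e1 => hc.
    have := yc i => /andP [h1 h2].
    have : `|y ord0 i - p ord0 i| < lo by lra.
    rewrite ltr_norml => /andP [h3 h4]; rewrite /hi in h2; split; lra.
  apply: le_trans (@dist_le _ _ _ x _ Pp) _.
  have -> : x - p = (x - y) + (y - p) by rewrite addrA subrK.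
  apply: le_trans (enormD _ _ _ _) _.
  have h1 : enorm (x - y) <= Num.sqrt d%:R * lo.
    by apply: enorm_le_coords => //; rewrite /lo; lra.
  have es : e / s * s = e by rewrite divfK // gt_eqF.
  have h2 := ler_wpM2r (ltW s0) ep1.
  rewrite es in h2.
  rewrite /lo /s in h1 h2 hp' *.
  nra.
split => //; split => //.
rewrite /rhoP /rhoL.
have qP0 : 0 < qP P by apply: lt_le_trans qLP.
apply: le_trans (_ : c * hL B / qP P <= _).
  by rewrite ler_pM2r // invr_gt0.
rewrite -!mulrA ler_wpM2l // ler_wpM2l // lef_pV2 //.
Qed.
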